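(* For all $\mu\in{\cal S}$, $$\langle{\cal F}_{\rm A}(\mu)\rangle=\langle\mu\rangle^2\qquad\text{and}\qquad\langle{\cal F}_{\rm b}(\mu)\rangle\leq2\langle\mu\rangle,$$ and consequently $$\langle{\cal F}(\mu)\rangle\leq4\langle\mu\rangle^2\qquad\text{and}\qquad\langle\widehat{\cal F}(\mu)\rangle\leq2\langle\mu\rangle^2.$$
   Context: **Spaces.** $S=\{0,1\}^{\mathbb N}$ with $\mathbb N=\{0,1,\dots\}$. ${\cal M}$ is the set of probability laws on $S$, and ${\cal S}\subset{\cal M}$ the shift-invariant (stationary) laws. For $\mu\in{\cal S}$, $\langle\mu\rangle:=\int\mu(dy)\,y(i)$, which does not depend on $i$. **Column maps.** $\Phi_{\rm A}(y,z)(k)=y(k)\wedge z(k)$ and $\Phi_{\rm b}(y)(k)=y(k)\vee y(k+1)$. ${\cal F}_{\rm A}(\mu)$ is the law of $\Phi_{\rm A}(Y,Z)$ and ${\cal F}_{\rm b}(\mu)$ the law of $\Phi_{\rm b}(Y)$, with $Y,Z$ independent of law $\mu$. ${\cal F}={\cal F}_{\rm A}\circ{\cal F}_{\rm b}$ and $\widehat{\cal F}={\cal F}_{\rm b}\circ{\cal F}_{\rm A}$; these maps send ${\cal S}$ into ${\cal S}$. *)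

(* Defs.v *)
From HB Require Import structures.
From mathcomp Require Import all_boot all_order all_algebra.
From mathcomp Require Import all_classical all_reals all_analysis.

Set Implicit Arguments.
Unset Strict Implicit.
Unset Printing Implicit Defensive.
Import Order.TTheory GRing.Theory Num.Theory.
Local Open Scope classical_set_scope.
Local Open Scope ring_scope.

(* Cylinder generators: the sets {y | y i = b}.  The product sigma-algebra on
   {0,1}^N is the sigma-algebra generated by them. *)
Definition cyl : set (set (nat -> bool)) :=
  [set A | exists (i : nat) (b : bool), A = [set y : nat -> bool | y i = b]].

Definition S := g_sigma_algebraType cyl.

Definition shift (y : S) : S := fun k => y k.+1.

Definition stationary (R : realType) (mu : probability S R) : Prop :=
  forall A : set S, measurable A -> mu (shift @^-1` A) = mu A.

Definition mean (R : realType) (mu : set S -> \bar R) : \bar R :=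
  (\int[mu]_(y in [set: S]) ((y 0%N)%:R)%:E)%E.

Definition PhiA (yz : S * S) : S := fun k => yz.1 k && yz.2 k.
Definition Phib (y : S) : S := fun k => y k || y k.+1.

(* F_A(mu) = law of PhiA(Y,Z), Y, Z independent with law mu:
   the pushforward of the product law mu x mu under PhiA. *)
Definition FA (R : realType) (mu : set S -> \bar R) : set S -> \bar R :=
  pushforward (mu \x mu)%E PhiA.
Definition Fb (R : realType) (mu : set S -> \bar R) : set S -> \bar R :=
  pushforward mu Phib.

Definition FF (R : realType) (mu : set S -> \bar R) := FA (Fb mu).
Definition FFhat (R : realType) (mu : set S -> \bar R) := Fb (FA mu).

(* Main.v *)
Require Import Defs.
From HB Require Import structures.
From mathcomp Require Import all_boot all_order all_algebra.
From mathcomp Require Import all_classical all_reals all_analysis.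
From mathcomp Require Import lra.
Import Order.TTheory GRing.Theory Num.Theory.
Local Open Scope classical_set_scope.
Local Open Scope ereal_scope.

Definition A0 : set S := [set y : S | y 0%N].

Lemma cyl_meas i b : measurable ([set y : S | y i = b]).
Proof. by apply: sub_sigma_algebra; exists i, b. Qed.

Lemma A0_meas : measurable A0.
Proof. have := cyl_meas 0 true. by congr measurable; apply/seteqP; split=> y /=. Qed.

Lemma mPhiA : measurable_fun [set: S * S] PhiA.
Proof.
apply: (@measurability _ _ _ S setT _ cyl); first by [].
move=> _ [B [i [b ->]] <-].
rewrite setTI.
have E : PhiA @^-1` [set y : S | y i = true] = [set y : S | y i = true] `*` [set y : S | y i = true].
  by apply/seteqP; split => -[y z] /=; rewrite /PhiA /=; case: (y i); case: (z i) => //= -[].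
case: b.
  by rewrite E; apply: measurableX; exact: cyl_meas.
have -> : PhiA @^-1` [set y : S | y i = false] = ~` (PhiA @^-1` [set y : S | y i = true]).
  by apply/seteqP; split => yz /=; case: (PhiA yz i).
by apply: measurableC; rewrite E; apply: measurableX; exact: cyl_meas.
Qed.

Lemma mPhib : measurable_fun [set: S] Phib.
Proof.
apply: (@measurability _ _ _ S setT _ cyl); first by [].
move=> _ [B [i [b ->]] <-].
rewrite setTI.
have E : Phib @^-1` [set y : S | y i = true] = [set y : S | y i = true] `|` [set y : S | y i.+1 = true].
  by apply/seteqP; split => y /=; rewrite /Phib /=; case: (y i); case: (y i.+1) => //=; auto; case.
case: b.
  by rewrite E; apply: measurableU; exact: cyl_meas.
have -> : Phib @^-1` [set y : S | y i = false] = ~` (Phib @^-1` [set y : S | y i = true]).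
  by apply/seteqP; split => yz /=; case: (Phib yz i).
by apply: measurableC; rewrite E; apply: measurableU; exact: cyl_meas.
Qed.

Lemma mean_push d (T : measurableType d) (R : realType) (m : measure T R) (f : T -> S)
  (mf : measurable_fun [set: T] f) : mean (pushforward m f) = m (f @^-1` A0).
Proof.
rewrite /mean (eq_integral (fun y : S => (\1_A0 y)%:E)); last first.
  move=> y _; rewrite indicE /A0; case: (boolP (y 0%N)) => h; [rewrite mem_set|rewrite memNset] => //.
by apply/negP.
by rewrite integral_indic ?setIT //; exact: A0_meas.
Qed.

Definition A1 : set S := [set y : S | y 1%N].

Lemma A1_meas : measurable A1.
Proof. have := cyl_meas 1 true. by congr measurable; apply/seteqP; split=> y /=. Qed.

Lemma shiftA0 : Defs.shift @^-1` A0 = A1.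
Proof. by []. Qed.

Lemma PhiA_A0 : PhiA @^-1` A0 = A0 `*` A0.
Proof. by apply/seteqP; split => -[y z]; rewrite /PhiA /A0 /=; [move/andP|move=> [-> ->]]. Qed.

Lemma PhiA_A1 : PhiA @^-1` A1 = A1 `*` A1.
Proof. by apply/seteqP; split => -[y z]; rewrite /PhiA /A1 /=; [move/andP|move=> [-> ->]]. Qed.

Lemma Phib_A0 : Phib @^-1` A0 = A0 `|` A1.
Proof.
apply/seteqP; split => y; rewrite /Phib /A0 /A1 /=; first by move/orP.
by case=> ->; rewrite ?orbT.
Qed.

Lemma mean_eq (R : realType) (nu : probability S R) : mean nu = nu A0.
Proof.
change (mean nu) with (mean (pushforward nu (@id S))).
by rewrite mean_push //; exact: measurable_id.
Qed.

Lemma meanFA (R : realType) (nu : probability S R) : mean (FA nu) = nu A0 * nu A0.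
Proof.
rewrite /FA mean_push; last exact: mPhiA.
rewrite PhiA_A0; exact: (product_measure1E nu nu A0_meas A0_meas).
Qed.

HB.instance Definition _ := isMeasurableFun.Build _ _ S S Phib mPhib.

Lemma twice_le (R : realType) (x : \bar R) : x + x <= 2%:E * x.
Proof.
case: x => [r| |] //=; first by rewrite -EFinD -EFinM lee_fin; lra.
by rewrite mulry gtr0_sg // mul1e.
by rewrite mulrNy gtr0_sg // mul1e.
Qed.

Theorem lemma18 (R : realType) (mu : probability S R) (hmu : stationary mu) :
  [/\ mean (FA mu) = mean mu * mean mu,
      mean (Fb mu) <= 2%:E * mean mu,
      mean (FF mu) <= 4%:E * (mean mu * mean mu)
    & mean (FFhat mu) <= 2%:E * (mean mu * mean mu)].
Proof.
have hA1 : mu A1 = mu A0 by rewrite -shiftA0 hmu //; exact: A0_meas.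
have U1 : mu (A0 `|` A1) <= mu A0 + mu A1 := measureU2 mu A0_meas A1_meas.
rewrite hA1 in U1.
have fb : Fb mu A0 <= 2%:E * mu A0.
  rewrite /Fb /pushforward Phib_A0.
  apply: le_trans U1 _.
  exact: twice_le.
have ge0 : 0 <= mu A0 by exact: measure_ge0.
have E0 : mean mu = mu A0 := mean_eq _ mu.
rewrite E0; split.
- exact: meanFA.
- have -> : mean (Fb mu) = mu (Phib @^-1` A0) by rewrite /Fb mean_push //; exact: mPhib.
  exact: fb.
- have -> : mean (FF mu) = (distribution mu Phib A0) * (distribution mu Phib A0).
    exact: (meanFA _ (distribution mu Phib)).
  have g2 : 0 <= distribution mu Phib A0 by exact: measure_ge0.
  have : distribution mu Phib A0 <= 2%:E * mu A0 by exact: fb.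
  move: g2 ge0.
  have := fin_num_measure (distribution mu Phib) A0 A0_meas.
  have := fin_num_measure mu A0 A0_meas.
  move: (distribution mu Phib A0) (mu A0) => [x| |] [y| |] //=; rewrite ?fin_numE //= => _ _.
  rewrite -!EFinM !lee_fin => h1 h2 h3.
  by nra.
  1,2: by move=> *; rewrite mulyy mulry gtr0_sg ?mul1e ?leey.
- have H : mean (FFhat mu) = (mu \x mu) (PhiA @^-1` (Phib @^-1` A0)).
    have H1 := @mean_push _ _ _ (mu \x mu) _ (measurableT_comp mPhib mPhiA).
    exact H1.
  have HH := lexx ((mu \x mu) (PhiA @^-1` (Phib @^-1` A0))).
  rewrite -{1}H in HH.
  apply: le_trans HH _.
  rewrite Phib_A0 preimage_setU PhiA_A0 PhiA_A1.
  have U2 : (mu \x mu) (A0 `*` A0 `|` A1 `*` A1) <= (mu \x mu) (A0 `*` A0) + (mu \x mu) (A1 `*` A1).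
    apply: measureU2.
    - by apply: measurableX; exact: A0_meas.
    - by apply: measurableX; exact: A1_meas.
  have P0 : (mu \x mu) (A0 `*` A0) = mu A0 * mu A0 := product_measure1E mu mu A0_meas A0_meas.
  have P1 : (mu \x mu) (A1 `*` A1) = mu A1 * mu A1 := product_measure1E mu mu A1_meas A1_meas.
  rewrite P0 P1 hA1 in U2.
  apply: le_trans U2 _.
  exact: twice_le.
Qed.
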